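(* Let $P_{2n+1}$ ($n\ge 1$) be a weighted path with vertices $v_1,\dots,v_{2n+1}$ and edges $v_iv_{i+1}$, $1\le i\le 2n$. Then: (i) $P_{2n+1}$ is a spanning subtree of $P_{2n+1}^{\#}$ (i.e. each $v_iv_{i+1}$ is an edge of $P_{2n+1}^{\#}$); (ii) $v_iv_j$ is an edge of $P_{2n+1}^{\#}$ if and only if $i+j$ is odd; (iii) for $n\ge 2$, $P_{2n+1}^{\#}$ has no pendant vertices.
   Context: A weighted graph has a nonzero real weight on each edge; its adjacency matrix $A$ has $(i,j)$ entry equal to the weight of edge $v_iv_j$, or $0$ if no edge. $A^{\#}$ is the group inverse of $A$ (unique $X$ with $AXA=A$, $XAX=X$, $AX=XA$); the group inverse graph $G^{\#}$ is the weighted graph on the same vertex set with $v_iv_j$ an edge iff $(A^{\#})_{ij}\neq 0$, weighted by that entry. A subgraph relation between weighted graphs refers to their underlying graphs. A pendant vertex is a vertex of degree one. *)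

(* Defs.v *)
From HB Require Import structures.
From mathcomp Require Import all_boot all_order all_algebra.
Set Implicit Arguments. Unset Strict Implicit. Unset Printing Implicit Defensive.
Import Order.TTheory GRing.Theory Num.Theory.
Local Open Scope ring_scope.

(* Adjacency matrix of the weighted path on N vertices (0-based) v_0,...,v_(N-1),
   with edge v_k v_(k+1) of weight w k. *)
Definition path_adj (R : nzRingType) (N : nat) (w : nat -> R) : 'M[R]_N :=
  \matrix_(i < N, j < N)
    if (j == i.+1 :> nat) then w i
    else if (i == j.+1 :> nat) then w j else 0.

Definition group_inverse (R : nzRingType) (N : nat) (A X : 'M[R]_N) : Prop :=
  [/\ A *m X *m A = A, X *m A *m X = X & A *m X = X *m A].

(* Underlying graph of the weighted graph with adjacency matrix X:
   v_i v_j is an edge iff i <> j and X i j <> 0. *)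
Definition wedge (R : nzRingType) (N : nat) (X : 'M[R]_N) (i j : 'I_N) : bool :=
  (i != j) && (X i j != 0).

Definition wdegree (R : nzRingType) (N : nat) (X : 'M[R]_N) (i : 'I_N) : nat :=
  #|[set j | wedge X i j]|.

(* Main.v *)
Require Import Defs.
From HB Require Import structures.
From mathcomp Require Import all_boot all_order all_algebra.
From mathcomp Require Import zify ring lra.
Set Implicit Arguments. Unset Strict Implicit. Unset Printing Implicit Defensive.
Import Order.TTheory GRing.Theory Num.Theory.
Local Open Scope ring_scope.

Lemma sum_delta (R : nzRingType) N (g : nat -> R) a :
  \sum_(j < N) (if (j : nat) == a then g j else 0) = if (a < N)%N then g a else 0.
Proof.
elim: N => [|N IH]; first by rewrite big_ord0.
rewrite big_ord_recr /= IH.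
case: (ltngtP a N) => h /=.
- by rewrite addr0 ltnS (ltnW h).
- have -> : (a < N.+1)%N = false by apply/negbTE; lia.
  by rewrite addr0.
- by rewrite h ltnSn add0r.
Qed.

Lemma mulA_entry (R : nzRingType) N (w : nat -> R) M (B : 'M[R]_(N, M))
  (f : nat -> R) (i : 'I_N) k :
  (forall j : 'I_N, B j k = f j) ->
  (path_adj N w *m B) i k =
  (if (0 < i)%N then w i.-1 * f i.-1 else 0) +
  (if (i.+1 < N)%N then w i * f i.+1 else 0).
Proof.
move=> hB; rewrite !mxE.
rewrite (eq_bigr (fun j : 'I_N => (if (j : nat) == i.+1 then w i * f j else 0)
   + (if (j : nat) == i.-1 then (if (0 < i)%N then w j * f j else 0) else 0))); last first.
  move=> j _; rewrite !mxE hB.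
  case: eqP => [->|h1].
    have -> : (i.+1 == i.-1) = false by apply/negbTE; lia.
    by rewrite addr0.
  rewrite add0r; case: eqP => [h2|h2].
    have -> : (j : nat) == i.-1 by apply/eqP; lia.
    have -> : (0 < i)%N by lia.
    by [].
  case: eqP => [h3|h3]; last by rewrite mul0r.
  case: (posnP i) => h4; first by rewrite mul0r.
  exfalso; lia.
rewrite big_split /= (sum_delta _ (fun j => w i * f j)) (sum_delta _ (fun j => if (0 < i)%N then w j * f j else 0)) addrC; congr (_ + _).
have -> : (i.-1 < N)%N by have := ltn_ord i; lia.
by [].
Qed.

Lemma hD p : (p.*2)./2 = p. Proof. lia. Qed.
Lemma hD1 p : (p.*2.+1)./2 = p. Proof. lia. Qed.

Fixpoint zz (R : realFieldType) (w : nat -> R) (m : nat) : R :=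
  match m with 0 => 1 | m'.+1 => - (w m'.*2 / w m'.*2.+1) * zz w m' end.
Lemma zzS (R : realFieldType) (w : nat -> R) m : zz w m.+1 = - (w m.*2 / w m.*2.+1) * zz w m.
Proof. by []. Qed.
Lemma zz0 (R : realFieldType) (w : nat -> R) : zz w 0 = 1.
Proof. by []. Qed.
Arguments zz : simpl never.

Definition Sle (R : realFieldType) (w : nat -> R) k := \sum_(m < k.+1) zz w m ^+ 2.
Definition cc (R : realFieldType) (w : nat -> R) k := (w k.*2.+1 * zz w k.+1)^-1.
Definition DD (R : realFieldType) (w : nat -> R) n k m :=
  cc w k * zz w m * (Sle w k - (if (m <= k)%N then Sle w n else 0)) / Sle w n.
Definition xx (R : realFieldType) (w : nat -> R) n i j :=
  if odd i && ~~ odd j then DD w n i./2 j./2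
  else if ~~ odd i && odd j then DD w n j./2 i./2 else 0.
Definition zv (R : realFieldType) (w : nat -> R) i := if odd i then 0 else zz w i./2.

Lemma zz_neq0 (R : realFieldType) (w : nat -> R) n :
  (forall k : nat, (k < n.*2)%N -> w k != 0) -> forall m, (m <= n)%N -> zz w m != 0.
Proof.
move=> hw; elim=> [|m IH] hm; first by rewrite zz0 oner_neq0.
rewrite zzS.
have h1 : w m.*2 != 0 by apply: hw; lia.
have h2 : w m.*2.+1 != 0 by apply: hw; lia.
rewrite mulf_neq0 // ?oppr_eq0 ?mulf_neq0 ?invr_eq0 //.
apply: IH; lia.
Qed.

Lemma SleS (R : realFieldType) (w : nat -> R) k : Sle w k.+1 = Sle w k + zz w k.+1 ^+ 2.
Proof. by rewrite /Sle big_ord_recr. Qed.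

Lemma Sle0 (R : realFieldType) (w : nat -> R) : Sle w 0 = 1.
Proof. by rewrite /Sle big_ord1 zz0 expr1n. Qed.

Lemma Sle_le (R : realFieldType) (w : nat -> R) k m : (k <= m)%N -> Sle w k <= Sle w m.
Proof.
elim: m => [|m IH] h; first by have -> : k = 0%N by lia.
case: (ltngtP k m.+1) => h'; last by rewrite h'.
- rewrite SleS; apply: le_trans (IH _) _; first by lia.
  by rewrite lerDl sqr_ge0.
- exfalso; lia.
Qed.

Lemma Sle_gt0 (R : realFieldType) (w : nat -> R) k : 0 < Sle w k.
Proof. by apply: lt_le_trans (Sle_le w (leq0n k)); rewrite Sle0 ltr01. Qed.

Lemma Sle_lt (R : realFieldType) (w : nat -> R) n :
  (forall k : nat, (k < n.*2)%N -> w k != 0) -> forall k, (k < n)%N -> Sle w k < Sle w n.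
Proof.
move=> hw k hk; apply: lt_le_trans (Sle_le w hk).
rewrite SleS ltrDl exprn_even_gt0 //=.
by apply: (zz_neq0 hw (m := k.+1)); lia.
Qed.

Lemma K1 (R : realFieldType) (w : nat -> R) n :
  (forall k : nat, (k < n.*2)%N -> w k != 0) -> forall p, (p < n)%N ->
  w p.*2 = - w p.*2.+1 * zz w p.+1 / zz w p.
Proof.
move=> hw p hp.
have h1 : w p.*2.+1 != 0 by apply: hw; lia.
have h2 : zz w p != 0 by apply: (zz_neq0 hw); lia.
rewrite zzS. field. by rewrite h1 h2.
Qed.

Ltac fld := field; do ?[apply/andP; split]; done.

Lemma E_oo (R : realFieldType) (w : nat -> R) n :
  (forall k : nat, (k < n.*2)%N -> w k != 0) -> forall p q, (p < n)%N -> (q < n)%N ->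
  w p.*2 * DD w n q p + w p.*2.+1 * DD w n q p.+1 = (p == q)%:R.
Proof.
move=> hw p q hp hq.
have h1 : w p.*2.+1 != 0 by apply: hw; lia.
have h2 : zz w p != 0 by apply: (zz_neq0 hw); lia.
have h3 : zz w p.+1 != 0 by apply: (zz_neq0 hw); lia.
have h4 : w q.*2.+1 != 0 by apply: hw; lia.
have h5 : zz w q.+1 != 0 by apply: (zz_neq0 hw); lia.
have h6 : Sle w n != 0 by rewrite gt_eqF // Sle_gt0.
rewrite /DD /cc (K1 hw hp).
case: (ltngtP p q) => h /=.
- fld.
- fld.
- subst q. rewrite ?leqnn ?ltnn ?eqxx.
  fld.
Qed.

Lemma E_ee (R : realFieldType) (w : nat -> R) n :
  (forall k : nat, (k < n.*2)%N -> w k != 0) -> forall p q, (p <= n)%N -> (q <= n)%N ->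
  (if (0 < p)%N then w p.-1.*2.+1 * DD w n p.-1 q else 0) +
  (if (p < n)%N then w p.*2 * DD w n p q else 0) =
  (p == q)%:R - (Sle w n)^-1 * (zz w p * zz w q).
Proof.
move=> hw p q hp hq.
have h2 : zz w p != 0 by apply: (zz_neq0 hw); lia.
have hq0 : zz w q != 0 by apply: (zz_neq0 hw); lia.
have h6 : Sle w n != 0 by rewrite gt_eqF // Sle_gt0.
have -> : (if (p < n)%N then w p.*2 * DD w n p q else 0) =
   - (zz w p)^-1 * zz w q * (Sle w p - (if (q <= p)%N then Sle w n else 0)) / Sle w n.
  case: ltnP => hpn.
    have h1 : w p.*2.+1 != 0 by apply: hw; lia.
    have h3 : zz w p.+1 != 0 by apply: (zz_neq0 hw); lia.
    rewrite /DD /cc (K1 hw hpn). fld.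
  have ep : p = n by lia.
  subst p. rewrite hq subrr. by rewrite mulr0 mul0r.
case: p hp h2 => [|p] hp h2 /=.
  rewrite Sle0 zz0 /=.
  case: q hq hq0 => [|q] hq hq0 /=.
    rewrite zz0. fld.
  fld.
have h1 : w p.*2.+1 != 0 by apply: hw; lia.
rewrite /DD /cc SleS.
case: (ltngtP q p.+1) => h.
- rewrite (_ : (q <= p)%N = true); last by lia.
  rewrite /=; fld.
- rewrite (_ : (q <= p)%N = false); last by apply/negbTE; lia.
  rewrite /=; fld.
- subst q. rewrite ?leqnn ?ltnn ?eqxx.
  rewrite /=; fld.
Qed.

Lemma sum_even (R : nzRingType) n (f : nat -> R) :
  \sum_(j < n.*2.+1) (if odd j then 0 else f j./2) = \sum_(m < n.+1) f m.
Proof.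
elim: n => [|n IH]; first by rewrite !big_ord1.
rewrite doubleS (big_ord_recr n.*2.+2) (big_ord_recr n.*2.+1) /= IH.
rewrite [in RHS]big_ord_recr /= odd_double /= addr0.
congr (_ + f _); lia.
Qed.

Lemma Xz_scalar (R : realFieldType) (w : nat -> R) n q : (q < n)%N ->
  \sum_(m < n.+1) DD w n q m * zz w m = 0.
Proof.
move=> hq.
rewrite (eq_bigr (fun m : 'I_n.+1 => cc w q / Sle w n *
   (zz w m ^+ 2 * Sle w q - (if (m <= q)%N then zz w m ^+ 2 else 0) * Sle w n))); last first.
  move=> m _; rewrite /DD; case: ifP => _; rewrite /=; ring.
rewrite -mulr_sumr sumrB -!mulr_suml -big_mkcond /=.
have -> : \sum_(i < n.+1 | (i <= q)%N) zz w i ^+ 2 = Sle w q.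
  rewrite /Sle (big_ord_widen n.+1 (fun m => zz w m ^+ 2)); last by lia.
  by apply: eq_bigl => i.
rewrite -/(Sle w n) (mulrC (Sle w n)) subrr. by rewrite mulr0.
Qed.

Definition X0 (R : realFieldType) (w : nat -> R) n : 'M[R]_(n.*2.+1) :=
  \matrix_(i, j) xx w n i j.
Definition zc (R : realFieldType) (w : nat -> R) n : 'cV[R]_(n.*2.+1) :=
  \col_i zv w i.
Definition Pm (R : realFieldType) (w : nat -> R) n : 'M[R]_(n.*2.+1) :=
  1%:M - (Sle w n)^-1 *: (zc w n *m (zc w n)^T).

Lemma par_cases a : exists p, a = p.*2 \/ a = p.*2.+1.
Proof. exists a./2; lia. Qed.

Lemma Az0_nat (R : realFieldType) (w : nat -> R) n :
  (forall k : nat, (k < n.*2)%N -> w k != 0) -> forall a, (a < n.*2.+1)%N ->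
  (if (0 < a)%N then w a.-1 * zv w a.-1 else 0) +
  (if (a.+1 < n.*2.+1)%N then w a * zv w a.+1 else 0) = 0.
Proof.
move=> hw a ha; have [p [ea|ea]] := par_cases a; subst a.
- rewrite /zv /= odd_double /=.
  case: p ha => [|p] ha /=; first by rewrite add0r; case: ifP; rewrite ?mulr0.
  rewrite doubleS /= odd_double /= mulr0 add0r; case: ifP; rewrite ?mulr0 //.
- rewrite /zv /= odd_double /= hD.
  have hp : (p < n)%N by lia.
  rewrite (_ : (p.*2.+2 < n.*2.+1)%N = true); last by lia.
  try (have -> : (p.*2.+2)./2 = p.+1 by lia).
  rewrite (K1 hw hp).
  have h2 : zz w p != 0 by apply: (zz_neq0 hw); lia.
  by field.
Qed.

Lemma hU p : uphalf (p.*2) = p. Proof. lia. Qed.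

Lemma AX_nat (R : realFieldType) (w : nat -> R) n :
  (forall k : nat, (k < n.*2)%N -> w k != 0) -> forall a b, (a < n.*2.+1)%N -> (b < n.*2.+1)%N ->
  (if (0 < a)%N then w a.-1 * xx w n a.-1 b else 0) +
  (if (a.+1 < n.*2.+1)%N then w a * xx w n a.+1 b else 0) =
  (a == b)%:R - (Sle w n)^-1 * (zv w a * zv w b).
Proof.
move=> hw a b ha hb.
have [p [ea|ea]] := par_cases a; have [q [eb|eb]] := par_cases b; subst a b.
- have -> : (p.*2 == q.*2) = (p == q) by apply/eqP/eqP; lia.
  rewrite /zv !odd_double /= !hD.
  rewrite -(E_ee hw (p := p) (q := q)); try lia.
  congr (_ + _).
    case: p {ha} => [|p] //. rewrite doubleS /= /xx /= ?odd_double /= ?hU ?hD ?hD1 //.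
  rewrite (_ : (p.*2.+1 < n.*2.+1)%N = (p < n)%N); last by apply/idP/idP; lia.
  by rewrite /xx /= ?odd_double /= ?hU ?hD ?hD1.
- have -> : (p.*2 == q.*2.+1) = false by apply/negbTE; lia.
  rewrite /zv /= ?odd_double /= !mulr0 subr0.
  case: p {ha} => [|p]; rewrite ?doubleS /xx /= ?odd_double /= ?mulr0 ?add0r.
    by case: ifP; rewrite ?mulr0.
  by case: ifP; rewrite ?mulr0 ?addr0.
- have -> : (p.*2.+1 == q.*2) = false by apply/negbTE; lia.
  rewrite /zv /= ?odd_double /= !mul0r mulr0 subr0.
  rewrite /xx /= ?odd_double /= mulr0 add0r.
  by case: ifP; rewrite ?mulr0.
- have -> : (p.*2.+1 == q.*2.+1) = (p == q) by apply/eqP/eqP; lia.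
  rewrite /zv /= ?odd_double /= !mul0r mulr0 subr0.
  rewrite (_ : (p.*2.+2 < n.*2.+1)%N = true); last by lia.
  rewrite /xx /= ?odd_double /= ?hU ?hD ?hD1.
  apply: E_oo => //; lia.
Qed.

Lemma Xz_nat (R : realFieldType) (w : nat -> R) n a : (a < n.*2.+1)%N ->
  \sum_(j < n.*2.+1) xx w n a j * zv w j = 0.
Proof.
move=> ha; case: (boolP (odd a)) => oa.
- rewrite (eq_bigr (fun j : 'I_n.*2.+1 => if odd j then 0 else DD w n a./2 j./2 * zz w j./2)).
    rewrite (sum_even n (fun m => DD w n a./2 m * zz w m)).
    apply: Xz_scalar; lia.
  move=> j _; rewrite /xx /zv oa /=; by case: (odd j); rewrite ?mulr0.
- apply: big1 => j _; rewrite /xx /zv (negbTE oa) /=.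
  by case: (odd j); rewrite ?mulr0 ?mul0r.
Qed.

Lemma adj_sym (R : nzRingType) N (w : nat -> R) : (path_adj N w)^T = path_adj N w.
Proof.
apply/matrixP => i j; rewrite !mxE.
case: (eqVneq (i : nat) j.+1) => h1; case: (eqVneq (j : nat) i.+1) => h2 //; exfalso; lia.
Qed.

Lemma X0_sym (R : realFieldType) (w : nat -> R) n : (X0 w n)^T = X0 w n.
Proof.
apply/matrixP => i j; rewrite !mxE /xx.
by case: (odd i); case: (odd j).
Qed.

Lemma Pm_sym (R : realFieldType) (w : nat -> R) n : (Pm w n)^T = Pm w n.
Proof.
apply/matrixP => i j; rewrite !mxE !big_ord1 !mxE eq_sym; congr (_ - _ * _).
by rewrite mulrC.
Qed.

Lemma Az0 (R : realFieldType) (w : nat -> R) n :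
  (forall k : nat, (k < n.*2)%N -> w k != 0) ->
  path_adj n.*2.+1 w *m zc w n = 0.
Proof.
move=> hw; apply/matrixP => i k.
rewrite (@mulA_entry _ _ w _ _ (zv w) i k); last by move=> j; rewrite mxE.
by rewrite mxE (Az0_nat hw).
Qed.

Lemma Xz0 (R : realFieldType) (w : nat -> R) n : X0 w n *m zc w n = 0.
Proof.
apply/matrixP => i k; rewrite !mxE.
rewrite (eq_bigr (fun j : 'I_n.*2.+1 => xx w n i j * zv w j)).
  exact: Xz_nat.
by move=> j _; rewrite !mxE.
Qed.

Lemma AX0 (R : realFieldType) (w : nat -> R) n :
  (forall k : nat, (k < n.*2)%N -> w k != 0) ->
  path_adj n.*2.+1 w *m X0 w n = Pm w n.
Proof.
move=> hw; apply/matrixP => i k.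
rewrite (@mulA_entry _ _ w _ _ (fun j => xx w n j k) i k); last by move=> j; rewrite mxE.
rewrite (AX_nat hw) //.
by rewrite !mxE !big_ord1 !mxE.
Qed.

Lemma X0A (R : realFieldType) (w : nat -> R) n :
  (forall k : nat, (k < n.*2)%N -> w k != 0) ->
  X0 w n *m path_adj n.*2.+1 w = Pm w n.
Proof.
move=> hw; rewrite -[X0 w n]X0_sym -[path_adj _ w]adj_sym -trmx_mul.
by rewrite AX0 // Pm_sym.
Qed.

Lemma X0_ginv (R : realFieldType) (w : nat -> R) n :
  (forall k : nat, (k < n.*2)%N -> w k != 0) ->
  group_inverse (path_adj n.*2.+1 w) (X0 w n).
Proof.
move=> hw; split; last by rewrite AX0 // X0A.
- rewrite AX0 // /Pm mulmxBl mul1mx -scalemxAl -mulmxA.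
  have -> : (zc w n)^T *m path_adj n.*2.+1 w = 0.
    by rewrite -[path_adj _ w]adj_sym -trmx_mul Az0 // trmx0.
  by rewrite mulmx0 scaler0 subr0.
- rewrite X0A // /Pm mulmxBl mul1mx -scalemxAl -mulmxA.
  have -> : (zc w n)^T *m X0 w n = 0.
    by rewrite -[X0 w n]X0_sym -trmx_mul Xz0 trmx0.
  by rewrite mulmx0 scaler0 subr0.
Qed.

Lemma ginv_unique (R : nzRingType) N (A X Y : 'M[R]_N) :
  group_inverse A X -> group_inverse A Y -> X = Y.
Proof.
move=> [h1 h2 h3] [k1 k2 k3].
have e : A *m X = Y *m A.
  have -> : A *m X = (A *m Y *m A) *m X by rewrite k1.
  rewrite k3 -!mulmxA h3 (mulmxA A X A) h1. by [].
have e' : A *m X = A *m Y by rewrite e k3.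
by rewrite -[LHS]h2 -mulmxA e' mulmxA -h3 e' k3 k2.
Qed.

Lemma DD_neq0 (R : realFieldType) (w : nat -> R) n :
  (forall k : nat, (k < n.*2)%N -> w k != 0) -> forall k m, (k < n)%N -> (m <= n)%N ->
  DD w n k m != 0.
Proof.
move=> hw k m hk hm.
have h1 : w k.*2.+1 != 0 by apply: hw; lia.
have h3 : zz w k.+1 != 0 by apply: (zz_neq0 hw); lia.
have h4 : zz w m != 0 by apply: (zz_neq0 hw); lia.
have h6 : Sle w n != 0 by rewrite gt_eqF // Sle_gt0.
rewrite /DD /cc; apply: mulf_neq0; last by rewrite invr_eq0.
apply: mulf_neq0; first by apply: mulf_neq0 => //; rewrite invr_eq0 mulf_neq0.
case: ifP => _.
  by rewrite subr_eq0 lt_eqF // (Sle_lt hw hk).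
by rewrite subr0 gt_eqF // Sle_gt0.
Qed.

Lemma wedge_X0 (R : realFieldType) (w : nat -> R) n :
  (forall k : nat, (k < n.*2)%N -> w k != 0) -> forall i j : 'I_(n.*2.+1),
  wedge (X0 w n) i j = odd (i + j).
Proof.
move=> hw i j; rewrite /wedge mxE /xx oddD.
have hi := ltn_ord i; have hj := ltn_ord j.
case: (boolP (odd i)) => oi; case: (boolP (odd j)) => oj /=.
- by rewrite eqxx andbF.
- rewrite DD_neq0 //; try lia.
  rewrite andbT; apply/eqP => e; rewrite e in oi; by rewrite oi in oj.
- rewrite DD_neq0 //; try lia.
  rewrite andbT; apply/eqP => e; rewrite e in oi; by rewrite oj in oi.
- by rewrite eqxx andbF.
Qed.

Lemma two_le N (P : pred 'I_N) (a b : 'I_N) :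
  a != b -> P a -> P b -> (1 < #|[set j | P j]|)%N.
Proof.
move=> hab ha hb.
have : [set a; b] \subset [set j | P j].
  apply/subsetP => x; rewrite !inE => /orP [] /eqP ->; by [].
move/subset_leq_card; by rewrite cards2 hab.
Qed.

Theorem proposition2p14 (R : realFieldType) (n : nat) (w : nat -> R) :
  (1 <= n)%N ->
  (forall k : nat, (k < n.*2)%N -> w k != 0) ->
  let A := path_adj n.*2.+1 w in
  (exists X, group_inverse A X) /\
  (forall X : 'M[R]_(n.*2.+1), group_inverse A X ->
     [/\ (forall i j : 'I_(n.*2.+1), (j = i.+1 :> nat) -> wedge X i j),
         (forall i j : 'I_(n.*2.+1), wedge X i j = odd (i + j)) &
         ((2 <= n)%N -> forall i : 'I_(n.*2.+1), wdegree X i != 1%N)]).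
Proof.
move=> hn hw A; split; first by exists (X0 w n); exact: X0_ginv.
move=> X hX; rewrite (ginv_unique hX (X0_ginv hw)).
split.
- move=> i j hij; rewrite (wedge_X0 hw) hij.
  by rewrite addnS /= addnn odd_double.
- exact: wedge_X0.
- move=> h2 i; rewrite /wdegree.
  have h0 : (0 < n.*2.+1)%N by lia.
  have h1 : (1 < n.*2.+1)%N by lia.
  have h2' : (2 < n.*2.+1)%N by lia.
  have h3 : (3 < n.*2.+1)%N by lia.
  have : (1 < #|[set j | wedge (X0 w n) i j]|)%N.
    case: (boolP (odd i)) => oi.
      apply: (@two_le _ _ (Ordinal h0) (Ordinal h2')) => //; rewrite (wedge_X0 hw) /=.
        by rewrite oddD ?(negbTE oi) ?oi.
      by rewrite oddD ?(negbTE oi) ?oi.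
    apply: (@two_le _ _ (Ordinal h1) (Ordinal h3)) => //; rewrite (wedge_X0 hw) /=.
      by rewrite oddD ?(negbTE oi) ?oi.
    by rewrite oddD ?(negbTE oi) ?oi.
  by case: #|_| => [|[|k]].
Qed.
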